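(* Let $S$ be a semigroup, let $T$ be a subsemigroup of $S$ generated by a finite set $A$, and let $s\in S$. Suppose that $|\langle T,s\rangle\setminus T|=n$ is finite. Then there exists $N\in\mathbb{N}$ such that for all $b_1,\ldots,b_n\in A\cup\{s\}$, if the elements $s, sb_1, sb_1b_2,\ldots, sb_1\cdots b_n$ are pairwise distinct, then there exist $0\le i\le n$, $1\le j\le N$ and $a_1,\ldots,a_j\in A$ such that $sb_1\cdots b_i=a_1\cdots a_j$ (where for $i=0$ the left-hand side is $s$).
   Context: $\langle T,s\rangle$ denotes the subsemigroup of $S$ generated by $T\cup\{s\}$. *)

(* Defs.v *)
From Stdlib Require Import List Arith.
Import ListNotations.

Inductive gen {G : Type} (op : G -> G -> G) (X : G -> Prop) : G -> Prop :=
| gen_base : forall x, X x -> gen op X x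
| gen_op : forall x y, gen op X x -> gen op X y -> gen op X (op x y).

Definition gen_with {G : Type} (op : G -> G -> G) (T : G -> Prop) (s : G) : G -> Prop :=
  gen op (fun x => T x \/ x = s).

Definition has_card {G : Type} (P : G -> Prop) (n : nat) : Prop :=
  exists l : list G, NoDup l /\ length l = n /\ (forall x, In x l <-> P x).

Fixpoint prefix {G : Type} (op : G -> G -> G) (s : G) (b : nat -> G) (k : nat) : G :=
  match k with
  | 0 => s
  | S k' => op (prefix op s b k') (b (S k'))
  end.

(* prodn op a j = a 1 * a 2 * ... * a j   for j >= 1  (prodn op a 0 := a 0, unused). *)
Fixpoint prodn {G : Type} (op : G -> G -> G) (a : nat -> G) (j : nat) : G :=
  match j with
  | 0 => a 0
  | 1 => a 1
  | S j' => op (prodn op a j') (a j)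
  end.

(* Main.v *)
Require Import Defs.
From Stdlib Require Import List Arith Lia Classical.
Import ListNotations.

Section Aux.
Variables (G : Type) (op : G -> G -> G).
Hypothesis op_assoc : forall x y z, op x (op y z) = op (op x y) z.

Lemma prodn_ext : forall j a a', 1 <= j -> (forall k, 1 <= k <= j -> a k = a' k) ->
  prodn op a j = prodn op a' j.
Proof.
  induction j as [|j IH]; intros a a' Hj H; [lia|].
  destruct j as [|j]; [simpl; apply H; lia|].
  change (op (prodn op a (S j)) (a (S (S j))) = op (prodn op a' (S j)) (a' (S (S j)))).
  rewrite (IH a a'); [rewrite H; [reflexivity|lia]|lia|].
  intros; apply H; lia.
Qed.

Lemma prodn_S : forall a j, 1 <= j -> prodn op a (S j) = op (prodn op a j) (a (S j)).
Proof. intros a j Hj. destruct j; [lia|reflexivity]. Qed.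

Lemma prodn_app : forall a a' j m, 1 <= j -> 1 <= m ->
  prodn op (fun k => if k <=? j then a k else a' (k - j)) (j + m)
  = op (prodn op a j) (prodn op a' m).
Proof.
  intros a a' j m Hj Hm. induction m as [|m IH]; [lia|].
  destruct m as [|m].
  - rewrite Nat.add_1_r, prodn_S by lia.
    rewrite (prodn_ext j _ a); [| exact Hj | intros k Hk;
      destruct (Nat.leb_spec k j); [reflexivity|lia]].
    destruct (Nat.leb_spec (S j) j); [lia|]. replace (S j - j) with 1 by lia. reflexivity.
  - replace (j + S (S m)) with (S (j + S m)) by lia.
    rewrite prodn_S by lia. rewrite IH by lia.
    destruct (Nat.leb_spec (S (j + S m)) j); [lia|].
    replace (S (j + S m) - j) with (S (S m)) by lia.
    rewrite <- op_assoc. reflexivity.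
Qed.

Lemma gen_rep : forall (A : list G) x, gen op (fun a => In a A) x ->
  exists j, 1 <= j /\ exists a : nat -> G, (forall k, 1 <= k <= j -> In (a k) A) /\ x = prodn op a j.
Proof.
  intros A x H. induction H as [x Hx|x y Hx IHx Hy IHy].
  - exists 1. split; [lia|]. exists (fun _ => x). split; [auto|reflexivity].
  - destruct IHx as [j [Hj [a [Ha ->]]]]. destruct IHy as [m [Hm [a' [Ha' ->]]]].
    exists (j + m). split; [lia|].
    exists (fun k => if k <=? j then a k else a' (k - j)). split.
    + intros k Hk. destruct (Nat.leb_spec k j); [apply Ha; lia|apply Ha'; lia].
    + rewrite prodn_app; auto.
Qed.

Lemma list_bound : forall (A : list G) (L : list G), exists N, forall x, In x L ->
  gen op (fun a => In a A) x ->
  exists j, 1 <= j <= N /\ exists a : nat -> G, (forall k, 1 <= k <= j -> In (a k) A) /\ x = prodn op a j.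
Proof.
  intros A L. induction L as [|y L IH].
  - exists 0. intros x [].
  - destruct IH as [N0 HN0].
    destruct (classic (gen op (fun a => In a A) y)) as [Hy|Hy].
    + destruct (gen_rep A y Hy) as [j0 [Hj0 [a0 [Ha0 E0]]]].
      exists (Nat.max N0 j0). intros x [<-|Hx] Hg.
      * exists j0. split; [lia|]. exists a0. auto.
      * destruct (HN0 x Hx Hg) as [j [Hj R]]. exists j. split; [lia|exact R].
    + exists N0. intros x [<-|Hx] Hg; [contradiction|auto].
Qed.

Fixpoint lvl (A : list G) (s : G) (k : nat) : list G :=
  match k with
  | 0 => [s]
  | S k => flat_map (fun x => map (op x) (A ++ [s])) (lvl A s k)
  end.

Lemma prefix_in_lvl : forall A s b k, (forall i, 1 <= i <= k -> In (b i) A \/ b i = s) ->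
  In (prefix op s b k) (lvl A s k).
Proof.
  intros A s b k. induction k as [|k IH]; intros H; [simpl; auto|].
  simpl. apply in_flat_map. exists (prefix op s b k). split.
  - apply IH. intros; apply H; lia.
  - apply in_map. apply in_or_app. destruct (H (S k)) as [h|h]; [lia|auto|].
    right; left; auto.
Qed.

Lemma prefix_gen : forall (T : G -> Prop) (A : list G) s b k,
  (forall a, In a A -> T a) ->
  (forall i, 1 <= i <= k -> In (b i) A \/ b i = s) ->
  gen_with op T s (prefix op s b k).
Proof.
  intros T A s b k HT. induction k as [|k IH]; intros H.
  - apply gen_base. right; reflexivity.
  - simpl. apply gen_op. apply IH; intros; apply H; lia.
    apply gen_base. destruct (H (S k)) as [h|h]; [lia|left; auto|right; auto].
Qed.

Lemma nodup_map_seq : forall (f : nat -> G) m k,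
  (forall i j, k <= i < k + m -> k <= j < k + m -> i <> j -> f i <> f j) ->
  NoDup (map f (seq k m)).
Proof.
  intros f m. induction m as [|m IH]; intros k H; simpl; [constructor|].
  constructor.
  - intros Hin. apply in_map_iff in Hin. destruct Hin as [i [Ei Hi]].
    apply in_seq in Hi. apply (H i k); [lia|lia|lia|auto].
  - apply IH. intros; apply H; lia.
Qed.

End Aux.

Theorem mainTheorem4
  (G : Type) (op : G -> G -> G)
  (op_assoc : forall x y z, op x (op y z) = op (op x y) z)
  (A : list G) (s : G) (n : nat)
  (Hcard : has_card (fun x => gen_with op (gen op (fun a => In a A)) s x
                              /\ ~ gen op (fun a => In a A) x) n) :
  exists N : nat,
    forall b : nat -> G,
      (forall k, 1 <= k <= n -> In (b k) A \/ b k = s) ->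
      (forall i j, i <= n -> j <= n -> i <> j -> prefix op s b i <> prefix op s b j) ->
      exists i, i <= n /\
        exists j, 1 <= j <= N /\
          exists a : nat -> G,
            (forall k, 1 <= k <= j -> In (a k) A) /\
            prefix op s b i = prodn op a j.
Proof.
  destruct (list_bound G op op_assoc A (flat_map (lvl G op A s) (seq 0 (S n)))) as [N HN].
  exists N. intros b Hb Hd.
  destruct (classic (exists i, i <= n /\ gen op (fun a => In a A) (prefix op s b i))) as [[i [Hi Hg]]|Hno].
  - exists i. split; [auto|].
    apply HN; auto. apply in_flat_map. exists i. split.
    + apply in_seq; lia.
    + apply prefix_in_lvl. intros; apply Hb; lia.
  - exfalso. destruct Hcard as [l [Hl [Hlen Hin]]].
    assert (HND : NoDup (map (prefix op s b) (seq 0 (S n)))).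
    { apply nodup_map_seq. intros; apply Hd; lia. }
    assert (Hinc : incl (map (prefix op s b) (seq 0 (S n))) l).
    { intros x Hx. apply in_map_iff in Hx. destruct Hx as [i [<- Hi]].
      apply in_seq in Hi. apply Hin. split.
      - apply (prefix_gen G op _ A). intros; apply gen_base; auto.
        intros; apply Hb; lia.
      - intros Hg. apply Hno. exists i. split; [lia|auto]. }
    pose proof (NoDup_incl_length HND Hinc) as Hle.
    rewrite length_map, length_seq in Hle. lia.
Qed.
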